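(* Let $(X,U)$ be a minimizer of Problem 1 (defined in the context). Then: (a) The linear matrix equation $$\begin{bmatrix} K & H \\ G & F \end{bmatrix}\begin{bmatrix} X \\ Z \end{bmatrix} = \begin{bmatrix} U \\ V \end{bmatrix}$$ has a unique solution $(K,H,G,F)$ with $K\in\mathbb{R}^{m\times n}$, $H\in\mathbb{R}^{m\times n(N-1)}$, $G\in\mathbb{R}^{n(N-1)\times n}$, $F\in\mathbb{R}^{n(N-1)\times n(N-1)}$. (b) For every initial state $x_0\in\mathbb{R}^n$, the closed loop of the plant $x(t+1)=Ax(t)+Bu(t)$, $x(0)=x_0$, with the compensator $z(t+1)=Fz(t)+Gx(t)$, $u(t)=Hz(t)+Kx(t)$, $z(0)=0$, generates the input sequence $u(t)=U(\mathrm{e}_{t+1}\otimes x_0)$ and state sequence $x(t)=X(\mathrm{e}_{t+1}\otimes x_0)$ for $t=0,1,\dots,N-1$ (where $\mathrm{e}_{t+1}\in\mathbb{R}^N$), and it drives the plant state to $x(N)=0$. (c) For every $x_0\in\{\mathrm{e}_1,\dots,\mathrm{e}_n\}$ (standard basis of $\mathbb{R}^n$), the output $y(t)=Cx(t)+Du(t)$ of this closed loop satisfies $-s\le y(t)\le s$ (componentwise) for $t=0,1,\dots,N-1$. (d) The closed-loop augmented system $\psi(t+1)=\mathcal{A}_{cl}\psi(t)$, with $\psi=(x,z)$ and $\mathcal{A}_{cl}=\begin{bmatrix}A+BK & BH\\ G & F\end{bmatrix}$, is internally stable (i.e. $\mathcal{A}_{cl}$ is Schur stable).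
   Context: Plant: discrete-time LTI system $x(t+1)=Ax(t)+Bu(t)$, $y(t)=Cx(t)+Du(t)$, with $x(t)\in\mathbb{R}^n$, $u(t)\in\mathbb{R}^m$ ($m\le n$), $y(t)\in\mathbb{R}^p$, real constant matrices $A,B,C,D$ of compatible sizes, and $(A,B)$ reachable. $N\ge 2$ is a horizon length. $\mathrm{e}_j$ denotes the $j$-th standard basis vector of the appropriate dimension. $P\in\mathbb{R}^{N\times N}$ is the nilpotent shift matrix $P=\begin{bmatrix}0 & 0\\ I_{N-1} & 0\end{bmatrix}$ (so $P\mathrm{e}_j=\mathrm{e}_{j+1}$ for $j<N$ and $P\mathrm{e}_N=0$). $\otimes$ is the Kronecker product. For a matrix $W$, $\|W\|_1=\sum_{i,j}|w_{ij}|$, and $\mathrm{abs}(W)$ is the entrywise absolute value. $\mathbf{1}_k\in\mathbb{R}^k$ is the all-ones vector. Given $s\in\mathbb{R}^p$ (componentwise nonnegative), Problem 1 is: minimize $\|U\|_1$ over $X\in\mathbb{R}^{n\times nN}$, $U\in\mathbb{R}^{m\times nN}$ subject to $AX+BU=X(P\otimes I_n)$, $X(\mathrm{e}_1\otimes I_n)=I_n$ (with $\mathrm{e}_1\in\mathbb{R}^N$), and $\mathrm{abs}(CX+DU)\le s(\mathbf{1}_n\otimes\mathbf{1}_N)^\top$ entrywise. Define $Z=\begin{bmatrix}0_{n(N-1)\times n} & I_{n(N-1)}\end{bmatrix}\in\mathbb{R}^{n(N-1)\times nN}$ and $V=Z(P\otimes I_n)$. *)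

(* Defs.v *)
(* Reals modelled by an arbitrary real closed field R
   (contains the real numbers as a special case); complex numbers R[i]
   from mathcomp-real-closed; Kronecker product = tensmx ( *t ) from
   mathcomp-real-closed's mxtens (row index (i,j) |-> i*p + j, the standard
   Kronecker layout). *)
From HB Require Import structures.
From mathcomp Require Import all_boot all_order all_algebra.
From mathcomp Require Import mxtens complex.
Set Implicit Arguments.
Unset Strict Implicit.
Unset Printing Implicit Defensive.
Import Order.TTheory GRing.Theory Num.Theory.
Local Open Scope ring_scope.

Section Defs.
Variable R : rcfType.

(* e_(j+1) in R^N : standard basis column vector, 0-based index j
   (so ebas N 0 is e_1). *)
Definition ebas (N j : nat) : 'cV[R]_N := \col_(i < N) ((i : nat) == j)%:R.

Definition shiftP (N : nat) : 'M[R]_N :=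
  \matrix_(i < N, j < N) ((i : nat) == j.+1)%:R.

(* Z = [0_{n(N-1) x n}  I_{n(N-1)}] in R^{n(N-1) x nN}. *)
Definition Zsel (n N : nat) : 'M[R]_(N.-1 * n, N * n) :=
  \matrix_(i, j) ((j : nat) == (i + n)%N)%:R.

Definition Vmat (n N : nat) : 'M[R]_(N.-1 * n, N * n) :=
  Zsel n N *m (shiftP N *t (1%:M : 'M[R]_n)).

Definition l1norm (a b : nat) (W : 'M[R]_(a, b)) : R :=
  \sum_(i < a) \sum_(j < b) `|W i j|.

(* (A,B) reachable: the columns of [B AB ... A^(n-1)B] span R^n, i.e. the
   row spaces of the (A^k B)^T, k < n, sum up to the whole space. *)
Definition reachable (n m : nat) (A : 'M[R]_n) (B : 'M[R]_(n, m)) : Prop :=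
  (\sum_(k < n) <<(A ^+ k *m B)^T>> == 1%:M :> 'M[R]_n)%MS.

Definition feasible (n m p N : nat) (A : 'M[R]_n) (B : 'M[R]_(n, m))
    (C : 'M[R]_(p, n)) (D : 'M[R]_(p, m)) (s : 'cV[R]_p)
    (X : 'M[R]_(n, N * n)) (U : 'M[R]_(m, N * n)) : Prop :=
  [/\ A *m X + B *m U = X *m (shiftP N *t (1%:M : 'M[R]_n)),
      castmx (erefl n, mul1n n) (X *m (ebas N 0 *t (1%:M : 'M[R]_n))) = 1%:M &
      forall i j, `|(C *m X + D *m U) i j| <= s i 0].

Definition minimizer (n m p N : nat) (A : 'M[R]_n) (B : 'M[R]_(n, m))
    (C : 'M[R]_(p, n)) (D : 'M[R]_(p, m)) (s : 'cV[R]_p)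
    (X : 'M[R]_(n, N * n)) (U : 'M[R]_(m, N * n)) : Prop :=
  feasible A B C D s X U /\
  forall (X' : 'M[R]_(n, N * n)) (U' : 'M[R]_(m, N * n)), feasible A B C D s X' U' -> l1norm U <= l1norm U'.

Fixpoint cl_traj (n m q : nat) (A : 'M[R]_n) (B : 'M[R]_(n, m))
    (K : 'M[R]_(m, n)) (H : 'M[R]_(m, q)) (G : 'M[R]_(q, n)) (F : 'M[R]_q)
    (x0 : 'cV[R]_n) (t : nat) : 'cV[R]_n * 'cV[R]_q :=
  match t with
  | 0 => (x0, 0)
  | t'.+1 =>
      let: (x, z) := cl_traj A B K H G F x0 t' in
      let u := H *m z + K *m x in
      (A *m x + B *m u, F *m z + G *m x)
  end.

Definition cl_x n m q A B K H G F x0 t : 'cV[R]_n :=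
  (@cl_traj n m q A B K H G F x0 t).1.
Definition cl_z n m q A B K H G F x0 t : 'cV[R]_q :=
  (@cl_traj n m q A B K H G F x0 t).2.
Definition cl_u n m q A B K H G F x0 t : 'cV[R]_m :=
  H *m (@cl_z n m q A B K H G F x0 t) + K *m (@cl_x n m q A B K H G F x0 t).

Definition schur_stable (k : nat) (M : 'M[R]_k) : Prop :=
  forall lam : R[i], eigenvalue (map_mx (fun x : R => (x%:C)%C) M) lam -> `|lam| < 1.

End Defs.

(* Main.v *)
Require Import Defs.
From HB Require Import structures.
From mathcomp Require Import all_boot all_order all_algebra.
From mathcomp Require Import mxtens complex.
Import Order.TTheory GRing.Theory Num.Theory.
Local Open Scope ring_scope.

Section H.
Set Implicit Arguments.
Unset Strict Implicit.

Variable R : rcfType.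

Lemma sum_tens N n (F : 'I_(N*n) -> R) :
  \sum_(l < N*n) F l = \sum_(a < N) \sum_(b < n) F (mxtens_index (a,b)).
Proof.
rewrite pair_bigA /= (reindex (@mxtens_index N n)) /=.
  by apply: eq_bigr => -[a b].
by exists (@mxtens_unindex N n) => x _; [apply: mxtens_indexK | apply: mxtens_unindexK].
Qed.

Definition blk r N n (W : 'M[R]_(r, N*n)) (t : 'I_N) : 'M[R]_(r, n) :=
  \matrix_(i, j) W i (mxtens_index (t, j)).

Lemma mul_ebas_tens r N n c (W : 'M[R]_(r, N*n)) (t : 'I_N) (Y : 'M[R]_(n, c)) :
  W *m (ebas R N t *t Y) = castmx (erefl r, esym (mul1n c)) (blk W t *m Y).
Proof.
apply/matrixP => i k; rewrite castmxE /= !mxE.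
case: (mxtens_indexP k) => k1 k2.
rewrite sum_tens (bigD1 t) //= [X in _ + X]big1 ?addr0.
  apply: eq_bigr => b _; rewrite tensmxE !mxE eqxx mul1r.
  by congr (W _ _ * Y _ _); apply: val_inj; rewrite /= ?[k1]ord1 ?mul0n ?add0n.
move=> a hat; apply: big1 => b _; rewrite tensmxE !mxE.
have -> : ((a : nat) == t) = false by apply/negbTE; apply: contra hat => /eqP e; apply/eqP/val_inj.
by rewrite mul0r mulr0.
Qed.

Lemma mul_ebas_tens_col r N n (W : 'M[R]_(r, N*n)) (t : 'I_N) (x0 : 'cV[R]_n) :
  W *m (ebas R N t *t x0) = blk W t *m x0.
Proof.
rewrite mul_ebas_tens; apply/matrixP => i j; rewrite castmxE.
by congr (_ _ _); apply: val_inj.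
Qed.

Lemma ebasS N t : shiftP R N *m ebas R N t = ebas R N t.+1.
Proof.
apply/matrixP => i j; rewrite !mxE.
under eq_bigr do rewrite !mxE.
case: (ltnP t N) => ht.
  rewrite (bigD1 (Ordinal ht)) //= big1 ?eqxx ?mulr1 ?addr0 //.
  move=> k hk; have -> : ((k : nat) == t) = false.
    by apply/negbTE; apply: contra hk => /eqP e; apply/eqP/val_inj.
  by rewrite mulr0.
rewrite big1 => [|k _].
  by rewrite ltn_eqF // (leq_trans (ltn_ord i)) // ltnW.
by rewrite (@ltn_eqF k t) ?mulr0 // (leq_trans (ltn_ord k)).
Qed.

Lemma ebas_ge N t : (N <= t)%N -> ebas R N t = 0.
Proof.
move=> h; apply/matrixP => i j; rewrite !mxE ltn_eqF //.
exact: leq_trans (ltn_ord i) h.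
Qed.

Lemma shift_tens N n t (x0 : 'cV[R]_n) :
  (shiftP R N *t (1%:M : 'M[R]_n)) *m (ebas R N t *t x0) = ebas R N t.+1 *t x0.
Proof. by rewrite tensmx_mul ebasS mul1mx. Qed.

Lemma ebas_delta N (j : 'I_N) : ebas R N j = delta_mx j 0.
Proof. by apply/matrixP => i k; rewrite !mxE [k]ord1 eqxx andbT. Qed.

Lemma shiftP_powe N k t : shiftP R N ^+ k *m ebas R N t = ebas R N (t + k).
Proof.
elim: k => [|k IH]; first by rewrite expr0 mul1mx addn0.
by rewrite exprS -mulmxE -mulmxA IH ebasS addnS.
Qed.

Lemma shiftP_nil N : shiftP R N ^+ N = 0.
Proof.
apply/matrixP => i j.
have := congr1 (fun M : 'cV[R]_N => M i 0) (shiftP_powe N N j).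
rewrite ebas_delta -colE !mxE => ->.
by rewrite ltn_eqF // (leq_trans (ltn_ord i)) // leq_addl.
Qed.

Lemma tens_pow N n k :
  (shiftP R N *t (1%:M : 'M[R]_n)) ^+ k.+1 = (shiftP R N ^+ k.+1) *t (1%:M : 'M[R]_n).
Proof.
elim: k => [|k IH]; first by rewrite !expr1.
by rewrite exprS IH -mulmxE tensmx_mul mul1mx [in RHS]exprS -mulmxE.
Qed.

End H.

Theorem theorem1 (R : rcfType) (n m p N : nat)
    (A : 'M[R]_n) (B : 'M[R]_(n, m)) (C : 'M[R]_(p, n)) (D : 'M[R]_(p, m))
    (s : 'cV[R]_p) (X : 'M[R]_(n, N * n)) (U : 'M[R]_(m, N * n)) :
  (m <= n)%N -> (2 <= N)%N -> reachable A B ->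
  (forall i, 0 <= s i 0) ->
  minimizer A B C D s X U ->
  exists (K : 'M[R]_(m, n)) (H : 'M[R]_(m, N.-1 * n))
         (G : 'M[R]_(N.-1 * n, n)) (F : 'M[R]_(N.-1 * n)),
    (* (a) (K,H,G,F) solves the linear matrix equation ... *)
    block_mx K H G F *m col_mx X (Zsel R n N) = col_mx U (Vmat R n N) /\
    (* ... and is its unique solution *)
    (forall (K' : 'M[R]_(m, n)) (H' : 'M[R]_(m, N.-1 * n))
            (G' : 'M[R]_(N.-1 * n, n)) (F' : 'M[R]_(N.-1 * n)),
       block_mx K' H' G' F' *m col_mx X (Zsel R n N) = col_mx U (Vmat R n N) ->
       [/\ K' = K, H' = H, G' = G & F' = F]) /\
    (* (b) closed-loop trajectories and deadbeat *)
    (forall x0 : 'cV[R]_n,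
       (forall t, (t < N)%N ->
          cl_u A B K H G F x0 t = U *m (ebas R N t *t x0) /\
          cl_x A B K H G F x0 t = X *m (ebas R N t *t x0)) /\
       cl_x A B K H G F x0 N = 0) /\
    (* (c) output constraints for x0 in {e_1,...,e_n} *)
    (forall (j : 'I_n) (t : nat), (t < N)%N ->
       forall k : 'I_p,
         let x0 := delta_mx j 0 : 'cV[R]_n in
         let y := C *m cl_x A B K H G F x0 t + D *m cl_u A B K H G F x0 t in
         - s k 0 <= y k 0 <= s k 0) /\
    (* (d) internal stability of the closed loop *)
    schur_stable (block_mx (A + B *m K) (B *m H) G F).
Proof.
move=> _ HN _ _ [[Hdyn Hinit Hout] _].
destruct N as [|N']; first by [].
have X1 : blk X ord0 = 1%:M.
  move: Hinit; rewrite (mul_ebas_tens X ord0) mulmx1.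
  move=> Hi; rewrite -Hi; apply/matrixP => i j; rewrite !castmxE.
  by congr (_ _ _); apply: val_inj.
have Z0 : blk (Zsel R n N'.+1) ord0 = 0.
  apply/matrixP => i j; rewrite !mxE /= mul0n add0n ltn_eqF //.
  exact: leq_trans (ltn_ord j) (leq_addl i n).
have eX : X = row_mx (lsubmx (X : 'M_(n, n + N' * n))) (rsubmx (X : 'M_(n, n + N' * n))).
  by rewrite hsubmxK.
have eX1 : lsubmx (X : 'M_(n, n + N' * n)) = 1%:M.
  rewrite -X1; apply/matrixP => i j; rewrite !mxE.
  by congr (X _ _); apply: val_inj; rewrite /= mul0n add0n.
have eZ : Zsel R n N'.+1 = row_mx 0 1%:M :> 'M_(N' * n, n + N' * n).
  apply/matrixP => i j; rewrite !mxE; case: splitP => k hk.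
    rewrite mxE hk ltn_eqF //; exact: leq_trans (ltn_ord k) (leq_addl i n).
  by rewrite !mxE hk addnC eqn_add2r eq_sym.
pose T := col_mx X (Zsel R n N'.+1).
pose X2 := rsubmx (X : 'M_(n, n + N' * n)).
pose Tinv := block_mx 1%:M (- X2) 0 1%:M : 'M[R]_(n + N' * n).
have HTTi : T *m Tinv = 1%:M.
  rewrite /T /Tinv eZ {1}eX eX1 -block_mxEv mulmx_block.
  by rewrite !mul1mx !mulmx1 !mul0mx !mulmx0 !addr0 add0r addNr -scalar_mx_block.
have HTiT : Tinv *m T = 1%:M.
  rewrite /T /Tinv eZ {1}eX eX1 -block_mxEv mulmx_block.
  by rewrite !mul1mx !mulmx1 !mul0mx !mulmx0 !addr0 add0r addrN -scalar_mx_block.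
pose Q := shiftP R N'.+1 *t (1%:M : 'M[R]_n).
pose M0 := col_mx U (Vmat R n N'.+1) *m Tinv : 'M[R]_(m + N'.+1.-1 * n, n + N'.+1.-1 * n).
have HM0 : M0 *m T = col_mx U (Vmat R n N'.+1) by rewrite /M0 -mulmxA HTiT mulmx1.
exists (ulsubmx M0), (ursubmx M0), (dlsubmx M0), (drsubmx M0).
rewrite submxK.
set K := ulsubmx M0; set H := ursubmx M0; set G := dlsubmx M0; set F := drsubmx M0.
have [HU HV] : (K *m X + H *m Zsel R n N'.+1 = U) /\ (G *m X + F *m Zsel R n N'.+1 = Vmat R n N'.+1).
  by apply: eq_col_mx; rewrite -mul_block_col /K /H /G /F submxK.
have traj : forall x0 t,
   [/\ cl_x A B K H G F x0 t = X *m (ebas R N'.+1 t *t x0),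
       cl_z A B K H G F x0 t = Zsel R n N'.+1 *m (ebas R N'.+1 t *t x0) &
       cl_u A B K H G F x0 t = U *m (ebas R N'.+1 t *t x0)].
  move=> x0 t.
  have Hu : forall x z, x = X *m (ebas R N'.+1 t *t x0) -> z = Zsel R n N'.+1 *m (ebas R N'.+1 t *t x0) ->
      H *m z + K *m x = U *m (ebas R N'.+1 t *t x0).
    by move=> x z -> ->; rewrite !mulmxA -mulmxDl addrC HU.
  suff [hx hz] : cl_x A B K H G F x0 t = X *m (ebas R N'.+1 t *t x0) /\ cl_z A B K H G F x0 t = Zsel R n N'.+1 *m (ebas R N'.+1 t *t x0).
    by split => //; rewrite /cl_u Hu.
  elim: t {Hu} => [|t [IHx IHz]].
    rewrite /cl_x /cl_z /= !(mul_ebas_tens_col _ ord0) X1 Z0 mul1mx mul0mx.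
    by [].
  move: IHx IHz; rewrite /cl_x /cl_z /=.
  case: (cl_traj A B K H G F x0 t) => x z /= -> ->.
  rewrite -!shift_tens; split.
    have -> : H *m (Zsel R n N'.+1 *m (ebas R N'.+1 t *t x0)) + K *m (X *m (ebas R N'.+1 t *t x0))
        = U *m (ebas R N'.+1 t *t x0) by rewrite !mulmxA -mulmxDl addrC HU.
    by rewrite !mulmxA -mulmxDl Hdyn.
  by rewrite !mulmxA -mulmxDl addrC HV /Vmat.
split; first exact: HM0.
split.
  move=> K' H' G' F' E.
  have E' : block_mx K' H' G' F' = M0 by rewrite /M0 -E -mulmxA HTTi mulmx1.
  by move: E'; rewrite -{1}(submxK M0) => /eq_block_mx.
split.
  move=> x0; split.
    by move=> t _; have [-> _ ->] := traj x0 t.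
  by have [-> _ _] := traj x0 N'.+1; rewrite ebas_ge // tens0mx mulmx0.
split.
  move=> j t ht k /=.
  have [-> _ ->] := traj (delta_mx j 0) t.
  have h := Hout k (mxtens_index (Ordinal ht, j)).
  rewrite !mulmxA -mulmxDl (mul_ebas_tens_col _ (Ordinal ht)) -colE !mxE.
  rewrite !mxE in h; by rewrite -ler_norml.
pose M := block_mx (A + B *m K) (B *m H) G F.
have MT : M *m T = T *m Q.
  rewrite /M /T mul_block_col mul_col_mx -Hdyn -HU HV /Vmat.
  by rewrite mulmxDl mulmxDr !mulmxA addrA.
have MkT : forall k, M ^+ k *m T = T *m Q ^+ k.
  elim=> [|kk IH]; first by rewrite !expr0 mul1mx mulmx1.
  by rewrite !exprS -!mulmxE -mulmxA IH !mulmxA MT.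
have MN : M ^+ N'.+1 = 0.
  rewrite -[M ^+ _]mulmx1 -HTTi mulmxA MkT /Q tens_pow shiftP_nil.
  by rewrite tens0mx mulmx0 mul0mx.
move=> a /eigenvalueP [v Hv vn0].
have Hv' : v *m map_mx (real_complex R) M = a *: v := Hv.
have Hk : forall k, v *m map_mx (real_complex R) (M ^+ k) = a ^+ k *: v.
  elim=> [|kk IH]; first by rewrite !expr0 map_mx1 mulmx1 scale1r.
  by rewrite exprSr -mulmxE map_mxM mulmxA IH -scalemxAl Hv' scalerA -exprSr.
have := Hk N'.+1; rewrite MN map_mx0 mulmx0 => /eqP.
rewrite eq_sym scaler_eq0 (negbTE vn0) orbF expf_eq0 => /andP [_ /eqP ->].
by rewrite normr0 ltr01.
Qed.
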